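(* Let $P \in S$ have degree $n > 0$ in $x$, and suppose its leading coefficient $p_n \in K[y]$ satisfies $0 < \deg_y(p_n) \leq n$. Then $C_S(P) = K[P]$.
   Context: Standing conventions: $K$ is a field, $R = K[y]$, $\sigma$ is a $K$-algebra endomorphism of $R$ with $\deg_y(\sigma(y)) > 1$, and $\delta$ is a $K$-linear $\sigma$-derivation of $R$ ($\delta(ab) = \sigma(a)\delta(b) + \delta(a)b$). $S = R[x;\sigma,\delta]$ is the Ore extension (polynomials $\sum r_i x^i$, $r_i\in R$, with $xr = \sigma(r)x + \delta(r)$). Degree of an element of $S$ means degree in $x$; its leading coefficient is the coefficient in $K[y]$ of the highest power of $x$. $C_S(P)$ is the centralizer of $P$ in $S$, and $K[P] = \{\sum_i c_i P^i : c_i \in K\}$. *)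

(* Defs.v *)
From HB Require Import structures.
From mathcomp Require Import all_boot all_order all_algebra.
Set Implicit Arguments. Unset Strict Implicit. Unset Printing Implicit Defensive.
Import GRing.Theory.
Local Open Scope ring_scope.

(* Elements of the Ore extension S = R[x; sigma, delta], R = K[y], are
   represented by their coefficient list in x: an element of
   {poly {poly K}}, i.e. sum_i r_i x^i with r_i in K[y] (coefficients on the
   left).  The additive structure is the one of {poly {poly K}}; the
   multiplication is the Ore product [omul] defined below. *)

Section Ore.
Variable K : fieldType.
Variables (sigma delta : {poly K} -> {poly K}).

(* left multiplication by x:
   x * (sum r_j x^j) = sum (sigma(r_j) x^(j+1) + delta(r_j) x^j) *)
Definition xmul (q : {poly {poly K}}) : {poly {poly K}} :=
  map_poly sigma q * 'X + map_poly delta q.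

Definition omul (p q : {poly {poly K}}) : {poly {poly K}} :=
  \sum_(i < size p) (p`_i)%:P * iter i xmul q.

Definition opow (p : {poly {poly K}}) (n : nat) : {poly {poly K}} :=
  iter n (omul p) 1.

Definition is_Kalg_endo : Prop :=
  [/\ forall a b, sigma (a + b) = sigma a + sigma b,
      forall a b, sigma (a * b) = sigma a * sigma b,
      sigma 1 = 1 &
      forall (c : K) a, sigma (c *: a) = c *: sigma a].

Definition is_sigma_derivation : Prop :=
  [/\ forall a b, delta (a + b) = delta a + delta b,
      forall (c : K) a, delta (c *: a) = c *: delta a &
      forall a b, delta (a * b) = sigma a * delta b + delta a * b].

Definition centralizer (P Q : {poly {poly K}}) : Prop := omul P Q = omul Q P.

Definition in_KP (P Q : {poly {poly K}}) : Prop :=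
  exists cs : seq K, Q = \sum_(i < size cs) omul (cs`_i)%:P%:P (opow P i).

End Ore.

(* Main.v *)
Require Import Defs.
From HB Require Import structures.
From mathcomp Require Import all_boot all_order all_algebra.
Import GRing.Theory.
Local Open Scope ring_scope.
From mathcomp Require Import zify.

Section NT.
Variables e d n : nat.
Hypothesis He : (2 <= e)%N.
Hypothesis Hd : (0 < d <= n)%N.

Let f a := (e ^ a - 1)%N.
Let I a := (f n %| d * f a)%N.

Lemma epos a : (1 <= e ^ a)%N.
Proof. by rewrite expn_gt0; case: e He. Qed.

Lemma f_add a b : f (a + b) = (e ^ b * f a + f b)%N.
Proof.
rewrite /f expnD; have := epos a; have := epos b.
move: (e ^ a)%N (e ^ b)%N => A B hB hA; nia.
Qed.

Lemma I_add a b : I a -> I b -> I (a + b).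
Proof.
rewrite /I f_add mulnDr mulnCA => ha hb; apply: dvdn_add => //.
exact: dvdn_mull.
Qed.

Lemma I_sub a b : (b <= a)%N -> I a -> I b -> I (a - b).
Proof.
move=> hba; rewrite /I -{1}(subnK hba) addnC f_add mulnDr mulnCA => ha hb.
by rewrite -(dvdn_addr _ (dvdn_mull (e ^ (a - b)) hb)).
Qed.

Lemma I0 : I 0.
Proof. by rewrite /I /f expn0 subnn muln0 dvdn0. Qed.

Lemma I_mul a t : I a -> I (t * a).
Proof.
move=> ha; elim: t => [|t IH]; first by rewrite mul0n I0.
by rewrite mulSn I_add.
Qed.

Lemma I_mod a b : I a -> I b -> I (a %% b).
Proof.
move=> ha hb; have := @I_sub _ _ (leq_trunc_div a b) ha (@I_mul b (a %/ b) hb).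
have -> : (a - a %/ b * b = a %% b)%N by rewrite {1}(divn_eq a b) addKn.
by [].
Qed.

Lemma I_gcd b a : I a -> I b -> I (gcdn a b).
Proof.
elim/ltn_ind: b a => b IH a ha hb.
case: (posnP b) => [->|bp]; first by rewrite gcdn0.
rewrite gcdnC -gcdn_modr; apply: IH => //; first by rewrite ltn_mod.
exact: I_mod.
Qed.

Lemma two_exp k : (2 * k <= 2 ^ k)%N.
Proof.
elim: k => // k IH; rewrite expnS.
case: k IH => // k IH; rewrite mulnS; nia.
Qed.

Lemma NT_main m k : (d + k * e ^ n = k + d * e ^ m)%N -> (n %| m)%N.
Proof.
move=> heq.
have np : (0 < n)%N by case/andP: Hd => h1 h2; apply: leq_trans h1 h2.
have Im : I m.
  rewrite /I /f; have := epos m; have := epos n.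
  move: heq; move: (e ^ m)%N (e ^ n)%N => A B heq hB hA.
  apply/dvdnP; exists k; nia.
have In : I n by rewrite /I dvdn_mull.
have Ig := @I_gcd m n In Im.
set g := gcdn n m in Ig.
have gn : (g %| n)%N by apply: dvdn_gcdl.
have gp : (0 < g)%N by rewrite gcdn_gt0 np.
have [gnE|gnE] := eqVneq g n; first by rewrite -gnE dvdn_gcdr.
exfalso.
have gltn : (g < n)%N by rewrite ltn_neqAle gnE dvdn_leq.
have g2 : (2 * g <= n)%N.
  case/dvdnP: gn => t ht; move: gltn; rewrite ht; case: t ht => [|[|t]] ht; rewrite ?mul0n ?mul1n ?ltnn //.
  move=> _; nia.
have fgp : (0 < f g)%N by rewrite /f subn_gt0 -{1}(expn0 e) ltn_exp2l.
have dfp : (0 < d * f g)%N by rewrite muln_gt0 fgp andbT; case/andP: Hd.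
have h1 := dvdn_leq dfp Ig.
have h2 : f n = (e ^ g * f (n - g) + f g)%N by rewrite -f_add subnK // ltnW.
have h3 : (0 < f (n - g))%N by rewrite /f subn_gt0 -{1}(expn0 e) ltn_exp2l // subn_gt0.
have h4 : (2 ^ (n - g) <= e ^ (n - g))%N by rewrite leq_exp2r // subn_gt0.
have h5 := two_exp (n - g).
have h6 : (d <= n)%N by case/andP: Hd.
have h2' : f n = (e ^ (n - g) * f g + f (n - g))%N.
  by rewrite -f_add addnC subnK // ltnW.
have hle : (n <= e ^ (n - g))%N.
  apply: leq_trans h4; apply: leq_trans h5; lia.
have hlt : (n * f g < f n)%N.
  rewrite h2' -addn1; apply: leq_add => //; exact: leq_mul hle (leqnn _).
have := leq_trans h1 (leq_mul h6 (leqnn (f g))).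
by rewrite leqNgt hlt.
Qed.
End NT.
Lemma gt_size (R : nzSemiRingType) (p : {poly R}) i : p`_i != 0 -> (i < size p)%N.
Proof. by rewrite ltnNge; apply: contra => h; rewrite nth_default. Qed.

Section Ore.
Variable K : fieldType.
Variables sigma delta : {poly K} -> {poly K}.
Variable Hs : is_Kalg_endo sigma.
Variable Hd : is_sigma_derivation sigma delta.

Implicit Types (p q r Y Q : {poly {poly K}}) (a b : {poly K}) (c : K).

Local Notation xm := (xmul sigma delta).
Local Notation om := (omul sigma delta).

Lemma sD a b : sigma (a + b) = sigma a + sigma b. Proof. by case: Hs. Qed.
Lemma sM a b : sigma (a * b) = sigma a * sigma b. Proof. by case: Hs. Qed.
Lemma s1 : sigma 1 = 1. Proof. by case: Hs. Qed.
Lemma sZ c a : sigma (c *: a) = c *: sigma a. Proof. by case: Hs. Qed.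
Lemma s0 : sigma 0 = 0.
Proof. by have := sZ 0 0; rewrite !scale0r. Qed.
Lemma sN a : sigma (- a) = - sigma a.
Proof. by rewrite -scaleN1r sZ scaleN1r. Qed.
Lemma sB a b : sigma (a - b) = sigma a - sigma b.
Proof. by rewrite sD sN. Qed.
Lemma sC c : sigma c%:P = c%:P.
Proof. by rewrite -alg_polyC sZ s1. Qed.

Lemma dD a b : delta (a + b) = delta a + delta b. Proof. by case: Hd. Qed.
Lemma dZ c a : delta (c *: a) = c *: delta a. Proof. by case: Hd. Qed.
Lemma dM a b : delta (a * b) = sigma a * delta b + delta a * b. Proof. by case: Hd. Qed.
Lemma d0 : delta 0 = 0.
Proof. by have := dZ 0 0; rewrite !scale0r. Qed.
Lemma dN a : delta (- a) = - delta a.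
Proof. by rewrite -scaleN1r dZ scaleN1r. Qed.
Lemma dB a b : delta (a - b) = delta a - delta b.
Proof. by rewrite dD dN. Qed.
Lemma d1 : delta 1 = 0.
Proof.
have := dM 1 1; rewrite !mulr1 s1 mul1r => h.
by apply: (addrI (delta 1)); rewrite addr0 -h.
Qed.
Lemma dC c : delta c%:P = 0.
Proof. by rewrite -alg_polyC dZ d1 scaler0. Qed.

Lemma xm_coef q i :
  (xm q)`_i = (if i == 0%N then 0 else sigma q`_i.-1) + delta q`_i.
Proof.
rewrite /xmul coefD coefMX !coef_map_id0 //; [exact: d0 | exact: s0].
Qed.

Lemma xmD p q : xm (p + q) = xm p + xm q.
Proof.
apply/polyP=> i; rewrite coefD !xm_coef !coefD dD.
case: (i == 0%N); rewrite ?sD; [rewrite !add0r //|].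
by rewrite addrACA.
Qed.
Lemma xm0 : xm 0 = 0.
Proof. by apply/polyP=> i; rewrite xm_coef !coef0 s0 d0; case: ifP; rewrite addr0. Qed.
Lemma xmN p : xm (- p) = - xm p.
Proof.
apply/polyP=> i; rewrite coefN !xm_coef !coefN dN.
by case: ifP => _; rewrite ?sN opprD ?oppr0.
Qed.
Lemma xmB p q : xm (p - q) = xm p - xm q.
Proof. by rewrite xmD xmN. Qed.
Lemma xmCM a p : xm (a%:P * p) = (sigma a)%:P * xm p + (delta a)%:P * p.
Proof.
apply/polyP=> i; rewrite xm_coef coefD !(coefCM a p) (coefCM (sigma a)) (coefCM (delta a)) xm_coef dM mulrDr.
case: ifP => _; rewrite ?mulr0 ?add0r ?sM //.
by rewrite addrA.
Qed.
Lemma xmKM (c : K) p : xm (c%:P%:P * p) = c%:P%:P * xm p.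
Proof. by rewrite xmCM sC dC mul0r addr0. Qed.

Lemma iterxmD i p q : iter i xm (p + q) = iter i xm p + iter i xm q.
Proof. by elim: i => //= i ->; rewrite xmD. Qed.
Lemma iterxm0 i : iter i xm 0 = 0.
Proof. by elim: i => //= i ->; rewrite xm0. Qed.
Lemma iterxmN i p : iter i xm (- p) = - iter i xm p.
Proof. by elim: i => //= i ->; rewrite xmN. Qed.
Lemma iterxmKM i (c : K) p : iter i xm (c%:P%:P * p) = c%:P%:P * iter i xm p.
Proof. by elim: i => //= i ->; rewrite xmKM. Qed.

Lemma omE N p q : (size p <= N)%N ->
  om p q = \sum_(i < N) (p`_i)%:P * iter i xm q.
Proof.
move=> hN; rewrite /omul (big_ord_widen N (fun i => (p`_i)%:P * iter i xm q) hN).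
rewrite big_mkcond /=; apply: eq_bigr => i _.
by case: ifP => // /negbT; rewrite -leqNgt => h; rewrite nth_default // mul0r.
Qed.

Lemma omDl p p' q : om (p + p') q = om p q + om p' q.
Proof.
set N := maxn (size p) (size p').
rewrite (omE N _ _ (leq_trans (size_polyD _ _) (leqnn _))) (omE N p) ?leq_maxl //.
rewrite (omE N p') ?leq_maxr // -big_split /=; apply: eq_bigr => i _.
by rewrite coefD polyCD mulrDl.
Qed.
Lemma om0l q : om 0 q = 0.
Proof. by rewrite /omul size_poly0 big_ord0. Qed.
Lemma omNl p q : om (- p) q = - om p q.
Proof.
by apply/eqP; rewrite -subr_eq0 opprK -omDl addrC subrr om0l.
Qed.
Lemma omDr p q q' : om p (q + q') = om p q + om p q'.
Proof.
by rewrite /omul -big_split; apply: eq_bigr => i _; rewrite iterxmD mulrDr.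
Qed.
Lemma om0r p : om p 0 = 0.
Proof. by rewrite /omul big1 // => i _; rewrite iterxm0 mulr0. Qed.
Lemma omNr p q : om p (- q) = - om p q.
Proof.
by apply/eqP; rewrite -subr_eq0 opprK -omDr addrC subrr om0r.
Qed.
Lemma omBl p p' q : om (p - p') q = om p q - om p' q.
Proof. by rewrite omDl omNl. Qed.
Lemma omBr p q q' : om p (q - q') = om p q - om p q'.
Proof. by rewrite omDr omNr. Qed.

Lemma om_suml (I : Type) (r : seq I) (P : pred I) (F : I -> {poly {poly K}}) q :
  om (\sum_(i <- r | P i) F i) q = \sum_(i <- r | P i) om (F i) q.
Proof. by elim: r => [|x r IH]; rewrite ?big_nil ?om0l // !big_cons; case: (P x); rewrite ?omDl IH. Qed.
Lemma om_sumr (I : Type) (r : seq I) (P : pred I) (F : I -> {poly {poly K}}) p :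
  om p (\sum_(i <- r | P i) F i) = \sum_(i <- r | P i) om p (F i).
Proof. by elim: r => [|x r IH]; rewrite ?big_nil ?om0r // !big_cons; case: (P x); rewrite ?omDr IH. Qed.

Lemma omCMl a p q : om (a%:P * p) q = a%:P * om p q.
Proof.
have [->|a0] := eqVneq a 0; first by rewrite polyC0 !mul0r om0l.
rewrite (omE (size p)); last by rewrite size_Cmul.
rewrite /omul big_distrr /=; apply: eq_bigr => i _.
by rewrite coefCM polyCM mulrA.
Qed.
Lemma omKMr (c : K) p q : om p (c%:P%:P * q) = c%:P%:P * om p q.
Proof.
rewrite /omul big_distrr /=; apply: eq_bigr => i _.
by rewrite iterxmKM !mulrA [_ * c%:P%:P]mulrC.
Qed.
Lemma omKl (c : K) q : om c%:P%:P q = c%:P%:P * q.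
Proof.
rewrite (omE 1) ?size_polyC ?leq_b1 // big_ord1 /=.
by rewrite coefC.
Qed.


Lemma xm_sum (I : Type) (s : seq I) (F : I -> {poly {poly K}}) :
  xm (\sum_(i <- s) F i) = \sum_(i <- s) xm (F i).
Proof. by elim: s => [|x s IH]; rewrite ?big_nil ?xm0 // !big_cons xmD IH. Qed.

Lemma size_xm_le Y : (size (xm Y) <= (size Y).+1)%N.
Proof.
apply/leq_sizeP => j hj; rewrite xm_coef.
have -> : (j == 0%N) = false by case: j hj.
rewrite !nth_default ?s0 ?d0 ?addr0 //; first by apply: leq_trans hj.
by case: j hj.
Qed.

Lemma om_xm Y r : om (xm Y) r = xm (om Y r).
Proof.
rewrite (omE (size Y).+1 _ _ (size_xm_le Y)) /omul xm_sum.
rewrite (eq_bigr (fun i : 'I_(size Y) => (sigma Y`_i)%:P * iter i.+1 xm r + (delta Y`_i)%:P * iter i xm r)); last first.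
  by move=> i _; rewrite xmCM.
rewrite big_split /=.
rewrite (eq_bigr (fun i : 'I_(size Y).+1 => (if i == 0%N :> nat then 0 else sigma Y`_i.-1)%:P * iter i xm r + (delta Y`_i)%:P * iter i xm r)); last first.
  by move=> i _; rewrite xm_coef polyCD mulrDl.
rewrite big_split /= big_ord_recl big_ord_recr /= polyC0 mul0r add0r.
by rewrite nth_default // d0 polyC0 mul0r addr0.
Qed.

Lemma om_iter i Y r : om (iter i xm Y) r = iter i xm (om Y r).
Proof. by elim: i => //= i IH; rewrite om_xm IH. Qed.

Lemma omA p q r : om (om p q) r = om p (om q r).
Proof.
rewrite [om p q]/omul om_suml [om p _]/omul; apply: eq_bigr => i _.
by rewrite omCMl om_iter.
Qed.


Lemma sig_sum (I : Type) (s : seq I) (F : I -> {poly K}) :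
  sigma (\sum_(i <- s) F i) = \sum_(i <- s) sigma (F i).
Proof. by elim: s => [|x s IH]; rewrite ?big_nil ?s0 // !big_cons sD IH. Qed.

Lemma sigX i : sigma ('X^i) = (sigma 'X) ^+ i.
Proof. by elim: i => [|i IH]; rewrite ?expr0 ?s1 // exprS sM IH -exprS. Qed.

Lemma sig_comp a : sigma a = a \Po sigma 'X.
Proof.
rewrite comp_polyE -{1}[a]coefK poly_def sig_sum; apply: eq_bigr => i _.
by rewrite sZ sigX.
Qed.

Variable HX : (2 < size (sigma 'X))%N.
Local Notation e := (size (sigma 'X)).-1.

Lemma e_ge2 : (2 <= e)%N.
Proof. by move: HX; case: (size _) => // k. Qed.

Lemma size_sig a : (size (sigma a)).-1 = ((size a).-1 * e)%N.
Proof. by rewrite sig_comp size_comp_poly. Qed.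

Lemma sig_eq0 a : (sigma a == 0) = (a == 0).
Proof. by rewrite sig_comp comp_poly_eq0 // ltnW. Qed.

Lemma size_sigj j a : (size (iter j sigma a)).-1 = ((size a).-1 * e ^ j)%N.
Proof. elim: j => [|j IH]; rewrite ?expn0 ?muln1 //; by rewrite /= size_sig IH expnS -mulnA [(_ ^ j * _)%N]mulnC. Qed.

Lemma sigj_eq0 j a : (iter j sigma a == 0) = (a == 0).
Proof. by elim: j => //= j IH; rewrite sig_eq0 IH. Qed.

Lemma sigjB j a b : iter j sigma (a - b) = iter j sigma a - iter j sigma b.
Proof. by elim: j => //= j ->; rewrite sB. Qed.

Lemma sigjZ j c a : iter j sigma (c *: a) = c *: iter j sigma a.
Proof. by elim: j => //= j ->; rewrite sZ. Qed.

Lemma sigjM j a b : iter j sigma (a * b) = iter j sigma a * iter j sigma b.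
Proof. by elim: j => //= j ->; rewrite sM. Qed.

Lemma xm_size_lead Y : Y != 0 ->
  size (xm Y) = (size Y).+1 /\ lead_coef (xm Y) = sigma (lead_coef Y).
Proof.
move=> Y0.
have hc : (xm Y)`_(size Y) = sigma (lead_coef Y).
  rewrite xm_coef (nth_default _ (leqnn (size Y))) d0 addr0.
  have -> : (size Y == 0%N) = false by rewrite size_poly_eq0 (negbTE Y0).
  by rewrite lead_coefE.
have hs : size (xm Y) = (size Y).+1.
  apply/eqP; rewrite eqn_leq size_xm_le /=; apply: gt_size.
  by rewrite hc sig_eq0 lead_coef_eq0.
by split => //; rewrite lead_coefE hs.
Qed.

Lemma iter_size_lead i Y : Y != 0 ->
  size (iter i xm Y) = (size Y + i)%N /\
  lead_coef (iter i xm Y) = iter i sigma (lead_coef Y).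
Proof.
move=> Y0; elim: i => [|i [IHs IHl]]; first by rewrite addn0.
have Yi0 : iter i xm Y != 0.
  by rewrite -size_poly_eq0 IHs addn_eq0 size_poly_eq0 (negbTE Y0).
have [hs hl] := @xm_size_lead (iter i xm Y) Yi0.
by rewrite /= hs hl IHs IHl addnS.
Qed.

Lemma coef_om p Y j : (om p Y)`_j = \sum_(i < size p) p`_i * (iter i xm Y)`_j.
Proof. by rewrite /omul coef_sum; apply: eq_bigr => i _; rewrite coefCM. Qed.

Lemma om_size_lead p Y : p != 0 -> Y != 0 ->
  size (om p Y) = (size p + size Y).-1 /\
  lead_coef (om p Y) = lead_coef p * iter (size p).-1 sigma (lead_coef Y).
Proof.
move=> p0 Y0.
have sp : size p = (size p).-1.+1 by rewrite prednK // lt0n size_poly_eq0.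
have sY : size Y = (size Y).-1.+1 by rewrite prednK // lt0n size_poly_eq0.
set n' := (size p).-1 in sp *; set m' := (size Y).-1 in sY *.
have hz : forall i j, (size Y + i <= j)%N -> (iter i xm Y)`_j = 0.
  move=> i j hij; apply: nth_default; by have [-> _] := @iter_size_lead i Y Y0.
have htop : (om p Y)`_(n' + m') = lead_coef p * iter n' sigma (lead_coef Y).
  rewrite coef_om sp big_ord_recr /= big1 ?add0r.
    have [hs hl] := @iter_size_lead n' Y Y0.
    by rewrite lead_coefE sp /= -hl lead_coefE hs sY addSn addnC.
  move=> [i hi] _ /=; rewrite hz ?mulr0 // sY addSn addnC ltn_add2r //.
have hne : lead_coef p * iter n' sigma (lead_coef Y) != 0.
  by rewrite mulf_neq0 ?lead_coef_eq0 // sigj_eq0 lead_coef_eq0.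
have hs : size (om p Y) = (n' + m').+1.
  apply/eqP; rewrite eqn_leq; apply/andP; split; last by apply: gt_size; rewrite htop.
  apply/leq_sizeP => j hj; rewrite coef_om big1 // => [[i hi]] _ /=.
  rewrite hz ?mulr0 //; apply: leq_trans hj; rewrite sY addSn ltnS addnC leq_add2r.
  by rewrite -ltnS -sp.
split; first by rewrite hs sp sY addSn addnS.
by rewrite lead_coefE hs /= htop.
Qed.


Lemma xm_Xn i : xm 'X^i = 'X^(i.+1) :> {poly {poly K}}.
Proof.
apply/polyP=> j; rewrite xm_coef !coefXn.
have dnat (b : bool) : delta b%:R = 0 by case: b; rewrite ?d0 // -polyC1 dC.
have snat (b : bool) : sigma b%:R = b%:R by case: b; rewrite ?s0 ?s1.
case: j => [|j] /=; first by rewrite add0r dnat.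
by rewrite dnat addr0 snat eqSS.
Qed.

Lemma iter_xm1 i : iter i xm 1 = 'X^i :> {poly {poly K}}.
Proof. by elim: i => [|i IH] //=; rewrite IH xm_Xn. Qed.

Lemma om1r p : om p 1 = p.
Proof.
rewrite /omul; transitivity (\sum_(i < size p) p`_i *: ('X^i : {poly {poly K}})).
  apply: eq_bigr => i _; by rewrite iter_xm1 mul_polyC.
by rewrite -poly_def coefK.
Qed.

Lemma om1l q : om 1 q = q.
Proof. by rewrite -polyC1 -polyC1 omKl !polyC1 mul1r. Qed.

Lemma opow_comm P i : om P (opow sigma delta P i) = om (opow sigma delta P i) P.
Proof.
elim: i => [|i IH] /=; first by rewrite om1r om1l.
by rewrite omA IH.
Qed.

Lemma KP_cent P Q : in_KP sigma delta P Q -> centralizer sigma delta P Q.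
Proof.
case=> cs ->; rewrite /centralizer om_sumr om_suml; apply: eq_bigr => i _.
by rewrite omKl omKMr opow_comm -omCMl.
Qed.

Lemma deg_mul a b : a != 0 -> b != 0 ->
  (size (a * b)).-1 = ((size a).-1 + (size b).-1)%N.
Proof.
move=> a0 b0; rewrite size_mul //.
move: a0 b0; rewrite -!size_poly_eq0; case: (size a) => // x _; case: (size b) => // y _.
by rewrite addSn addnS.
Qed.

Section Main.
Variable P : {poly {poly K}}.
Variable n : nat.
Variable HP : size P = n.+1.
Variable Hn : (0 < n)%N.
Variable Hlead : (0 < (size (lead_coef P)).-1 <= n)%N.

Local Notation pl := (lead_coef P).
Local Notation d := (size (lead_coef P)).-1.

Lemma P0 : P != 0.
Proof. by rewrite -size_poly_eq0 HP. Qed.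

Lemma pl0 : pl != 0.
Proof. by rewrite lead_coef_eq0 P0. Qed.

Lemma size_opow j : size (opow sigma delta P j) = (j * n).+1.
Proof.
elim: j => [|j IH] /=; first by rewrite size_poly1.
have T0 : opow sigma delta P j != 0 by rewrite -size_poly_eq0 IH.
have [-> _] := @om_size_lead _ _ P0 T0.
by rewrite HP IH addSn /= mulSn addnS.
Qed.

Lemma lc_eq Q m : centralizer sigma delta P Q -> size Q = m.+1 ->
  pl * iter n sigma (lead_coef Q) = lead_coef Q * iter m sigma pl.
Proof.
move=> hc hQ; have Q0 : Q != 0 by rewrite -size_poly_eq0 hQ.
have [_ h1] := @om_size_lead _ _ P0 Q0; have [_ h2] := @om_size_lead _ _ Q0 P0.
by move: h1 h2; rewrite HP hQ /= hc => <- ->.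
Qed.

Lemma deg_eq u m : u != 0 -> pl * iter n sigma u = u * iter m sigma pl ->
  (d + (size u).-1 * e ^ n = (size u).-1 + d * e ^ m)%N.
Proof.
move=> u0 h; have := congr1 (fun x : {poly K} => (size x).-1) h => /=.
rewrite !deg_mul ?sigj_eq0 ?pl0 // !size_sigj.
by rewrite addnC.
Qed.

Lemma deg_uniq (m a b : nat) : (d + a * e ^ n = a + d * e ^ m)%N ->
  (d + b * e ^ n = b + d * e ^ m)%N -> a = b.
Proof.
move=> ha hb.
have hE : (2 <= e ^ n)%N.
  apply: leq_trans e_ge2 _; rewrite -{1}(expn1 e) leq_pexp2l //.
  by apply: leq_trans _ e_ge2.
move: ha hb hE; move: (e ^ n)%N (d * e ^ m)%N => E F; nia.
Qed.

Lemma step Q m : centralizer sigma delta P Q -> size Q = m.+1 ->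
  exists j c, [/\ m = (j * n)%N,
    (size (Q - c%:P%:P * opow sigma delta P j)%R <= m)%N &
    centralizer sigma delta P (Q - c%:P%:P * opow sigma delta P j)].
Proof.
move=> hc hQ.
have Q0 : Q != 0 by rewrite -size_poly_eq0 hQ.
set q := lead_coef Q.
have q0 : q != 0 by rewrite lead_coef_eq0.
have hq := @lc_eq _ _ hc hQ.
have dq := @deg_eq _ _ q0 hq.
have hnm : (n %| m)%N.
  exact: (@NT_main _ _ _ e_ge2 Hlead _ _ dq).
set j := (m %/ n)%N.
have mj : m = (j * n)%N by rewrite divnK.
set T := opow sigma delta P j.
have hT : size T = m.+1 by rewrite size_opow -mj.
have T0 : T != 0 by rewrite -size_poly_eq0 hT.
set t := lead_coef T.
have t0 : t != 0 by rewrite lead_coef_eq0.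
have ht := @lc_eq _ _ (opow_comm P j) hT; rewrite -/T -/t in ht.
have dt := @deg_eq _ _ t0 ht.
have dqt := @deg_uniq _ _ _ dq dt.
set c := lead_coef q / lead_coef t.
set u := q - c *: t.
have hu : pl * iter n sigma u = u * iter m sigma pl.
  by rewrite /u sigjB sigjZ mulrBr mulrBl hq -scalerAr ht -scalerAl.
have sqt : size q = size t.
  move: dqt q0 t0; rewrite -!size_poly_eq0.
  by case: (size q) => // x; case: (size t) => // y /= -> .
have hut : u`_(size q).-1 = 0.
  rewrite /u coefB coefZ {2}sqt -!lead_coefE /c mulfVK ?subrr //.
  by rewrite lead_coef_eq0.
have u0 : u = 0.
  apply/eqP; apply: contraT => u0.
  have := @deg_eq _ _ u0 hu => du.
  have := @deg_uniq _ _ _ du dq => e1.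
  have : (size u <= (size q).-1)%N.
    apply/leq_sizeP => i hi.
    rewrite leq_eqVlt in hi; case/orP: hi => [/eqP <- //|hi].
    by rewrite /u coefB coefZ !nth_default ?mulr0 ?subr0 // -?sqt; apply: leq_trans (leqSpred _) hi.
  rewrite -e1; move: u0; rewrite -size_poly_eq0.
  by case: (size u) => // x _; rewrite ltnn.
exists j, c; split => //.
- apply/leq_sizeP => i hi.
  rewrite coefB coefCM.
  rewrite leq_eqVlt in hi; case/orP: hi => [/eqP <-|hi].
    have -> : Q`_m = q by rewrite /q lead_coefE hQ.
    have -> : T`_m = t by rewrite /t lead_coefE hT.
    by move: u0; rewrite /u mul_polyC => /eqP; rewrite subr_eq0 => /eqP <-; rewrite subrr.
  by rewrite !nth_default ?mulr0 ?subr0 // ?hQ ?hT.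
- rewrite /centralizer omBr omBl omKMr -[c%:P%:P * T]/((c%:P)%:P * T) omCMl.
  by rewrite hc opow_comm.
Qed.

Lemma cent_KP' N : forall Q, (size Q <= N)%N -> centralizer sigma delta P Q ->
  exists (f : nat -> K) (N' : nat),
    Q = \sum_(i < N') (f i)%:P%:P * opow sigma delta P i.
Proof.
elim: N => [|N IH] Q hs hc.
  exists (fun _ => 0), 0%N; rewrite big_ord0.
  by apply/eqP; rewrite -size_poly_leq0.
rewrite leq_eqVlt in hs; case/orP: hs => [/eqP hs|hs]; last exact: IH.
have [j [c [mj hs' hc']]] := @step _ _ hc hs.
have [f [N' hQ']] := IH _ hs' hc'.
exists (fun i => (if (i < N')%N then f i else 0) + (if i == j then c else 0)), (maxn N' j.+1).
have -> : Q = (Q - c%:P%:P * opow sigma delta P j) + c%:P%:P * opow sigma delta P j.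
  by rewrite subrK.
rewrite hQ'.
rewrite (eq_bigr (fun i : 'I_(maxn N' j.+1) =>
   (if (i < N')%N then f i else 0)%:P%:P * opow sigma delta P i +
   (if i == j :> nat then c%:P%:P * opow sigma delta P i else 0))); last first.
  by move=> i _; rewrite !polyCD mulrDl; case: (i == j :> nat); rewrite ?polyC0 ?mul0r.
rewrite big_split /=; congr (_ + _).
  rewrite (big_ord_widen (maxn N' j.+1) (fun i => (f i)%:P%:P * opow sigma delta P i)) ?leq_maxl //.
  rewrite big_mkcond /=; apply: eq_bigr => i _.
  by case: ifP; rewrite ?polyC0 ?mul0r.
rewrite -big_mkcond /= (big_ord1_eq _ (fun k : nat => (c%:P)%:P * opow sigma delta P k)).
by rewrite leq_max ltnSn orbT.
Qed.

Lemma cent_KP Q : centralizer sigma delta P Q -> in_KP sigma delta P Q.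
Proof.
move=> hc; have [f [N' ->]] := @cent_KP' (size Q) Q (leqnn _) hc.
exists (mkseq f N'); rewrite size_mkseq; apply: eq_bigr => i _.
by rewrite nth_mkseq // omKl.
Qed.

End Main.

End Ore.

Theorem proposition5p6 (K : fieldType) (sigma delta : {poly K} -> {poly K})
  (Hsigma : is_Kalg_endo sigma)
  (HsigmaY : (2 < size (sigma 'X))%N)
  (Hdelta : is_sigma_derivation sigma delta)
  (P : {poly {poly K}}) (n : nat)
  (HdegP : size P = n.+1) (Hn : (0 < n)%N)
  (Hlead : (0 < (size (lead_coef P)).-1 <= n)%N) :
  forall Q : {poly {poly K}},
    centralizer sigma delta P Q <-> in_KP sigma delta P Q.
Proof.
move=> Q; split.
- have := @cent_KP K sigma delta Hsigma Hdelta HsigmaY P n HdegP Hn Hlead Q. exact.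
- exact: (@KP_cent K sigma delta Hsigma Hdelta P Q).
Qed.
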